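(* Let $n,k$ be integers with $2\le k\le n/2$ such that $p=\gcd(n,k-1)>1$, and let $q=n/p$. Choose positive angles $\theta_1,\dots,\theta_p$ with $\theta_1+\dots+\theta_p=2\pi/q$. Divide the unit circle into $q$ equal arcs, and divide each of these arcs into $p$ consecutive arcs of angular lengths $\theta_1,\dots,\theta_p$, in this order. Then the inscribed $n$-gon whose vertices are the $n$ resulting division points is a Gutkin $(n,k)$-gon.
   Context: Let $P$ be a convex $n$-gon in the Euclidean plane with vertices $v_0,\dots,v_{n-1}$ in their cyclic (counterclockwise) order, indices taken modulo $n$. $P$ is a Gutkin $(n,k)$-gon if there exists an angle $\alpha$ such that for every $i$, $\angle v_{i+1}v_iv_{i+k}=\angle v_{i+k-1}v_{i+k}v_i=\alpha$, where $\angle abc$ denotes the angle at $b$ between the segments $ba$ and $bc$. *)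

(* Defs.v *)
From Stdlib Require Import Reals Lra Lia Arith.
Open Scope R_scope.

Definition point : Type := (R * R)%type.

Definition dot (u w : point) : R := fst u * fst w + snd u * snd w.
Definition vsub (u w : point) : point := (fst u - fst w, snd u - snd w).
Definition vnorm (u : point) : R := sqrt (dot u u).
Definition cross3 (a b c : point) : R :=
  let u := vsub b a in let w := vsub c a in fst u * snd w - snd u * fst w.

Definition angle (a b c : point) : R :=
  acos (dot (vsub a b) (vsub c b) / (vnorm (vsub a b) * vnorm (vsub c b))).

Definition vtx (n : nat) (v : nat -> point) (i : nat) : point := v (i mod n).

(* v_0, ..., v_{n-1} are the vertices, in counterclockwise cyclic order,
   of a (strictly) convex n-gon: every other vertex lies strictly to the
   left of each directed edge v_i v_{i+1}. *)
Definition convex_ccw_polygon (n : nat) (v : nat -> point) : Prop :=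
  (3 <= n)%nat /\
  forall i j : nat, (i < n)%nat -> (j < n)%nat -> j <> i -> j <> ((i + 1) mod n)%nat ->
    cross3 (vtx n v i) (vtx n v (i + 1)) (vtx n v j) > 0.

Definition gutkin (n k : nat) (v : nat -> point) : Prop :=
  convex_ccw_polygon n v /\
  exists alpha : R, forall i : nat,
    angle (vtx n v (i + 1)) (vtx n v i) (vtx n v (i + k)) = alpha /\
    angle (vtx n v (i + k - 1)) (vtx n v (i + k)) (vtx n v i) = alpha.

Fixpoint psum (th : nat -> R) (m : nat) : R :=
  match m with O => 0 | S m' => psum th m' + th m' end.

(* the division points: vertex i = r*p + j (j < p) sits at angle
   2*pi*r/q + theta_1 + ... + theta_j (theta indexed from 0 here) *)
Definition division_point (p q : nat) (th : nat -> R) (i : nat) : point :=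
  let phi := 2 * PI * INR (i / p) / INR q + psum th (i mod p) in
  (cos phi, sin phi).

(* Main.v *)
Require Import Defs.
From Stdlib Require Import Reals Lra Lia Arith.
Open Scope R_scope.

Definition P (t : R) : point := (cos t, sin t).

Lemma vsub_P a x : vsub (P (a + 2*x)) (P a) = (2*sin x * (- sin (a+x)), 2*sin x * cos (a+x)).
Proof.
  unfold vsub, P; simpl. f_equal.
  - replace (a + 2*x) with ((a+x)+x) by ring.
    replace (cos a) with (cos((a+x) - x)) by (f_equal; ring).
    rewrite cos_plus, cos_minus; ring.
  - replace (a + 2*x) with ((a+x)+x) by ring.
    replace (sin a) with (sin((a+x) - x)) by (f_equal; ring).
    rewrite sin_plus, sin_minus; ring.
Qed.

Lemma norm_P a x : vnorm (vsub (P (a + 2*x)) (P a)) = 2 * Rabs (sin x).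
Proof.
  unfold vnorm; rewrite vsub_P; unfold dot; simpl.
  replace (2 * sin x * - sin (a + x) * (2 * sin x * - sin (a + x)) +
     2 * sin x * cos (a + x) * (2 * sin x * cos (a + x))) with (Rsqr (2 * sin x)).
  - rewrite sqrt_Rsqr_abs, Rabs_mult, Rabs_right by lra. ring.
  - unfold Rsqr. pose proof (sin2_cos2 (a+x)). unfold Rsqr in H. nra.
Qed.

Lemma angle_P a x y : 0 < sin x * sin y ->
  angle (P (a + 2*x)) (P a) (P (a + 2*y)) = acos (cos (y - x)).
Proof.
  intro H. unfold angle. rewrite !norm_P. f_equal.
  rewrite !vsub_P. unfold dot; simpl.
  replace (2 * Rabs (sin x) * (2 * Rabs (sin y))) with (4 * (sin x * sin y)).
  2:{ replace (2 * Rabs (sin x) * (2 * Rabs (sin y))) with (4 * (Rabs (sin x * sin y))) by (rewrite Rabs_mult; ring).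
      rewrite Rabs_right by lra. ring. }
  replace (y - x) with ((a+y) - (a+x)) by ring. rewrite cos_minus. field. split; intro; subst; rewrite H0 in H; lra.
Qed.

Lemma angle_gen a b c : 0 < sin ((b-a)/2) * sin ((c-a)/2) ->
  angle (P b) (P a) (P c) = acos (cos ((c-b)/2)).
Proof.
  intro H. pose proof (angle_P a ((b-a)/2) ((c-a)/2) H) as H0.
  replace (a + 2*((b-a)/2)) with b in H0 by field.
  replace (a + 2*((c-a)/2)) with c in H0 by field.
  rewrite H0. f_equal. f_equal. field.
Qed.

Lemma cross_P a x y : cross3 (P a) (P (a + 2*x)) (P (a + 2*y)) = 4 * sin x * sin y * sin (y - x).
Proof.
  unfold cross3. rewrite !vsub_P. simpl.
  replace (y - x) with ((a+y) - (a+x)) by ring. rewrite sin_minus. ring.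
Qed.

Lemma cross_gen a b c : cross3 (P a) (P b) (P c) = 4 * sin ((b-a)/2) * sin ((c-a)/2) * sin ((c-b)/2).
Proof.
  pose proof (cross_P a ((b-a)/2) ((c-a)/2)) as H0.
  replace (a + 2*((b-a)/2)) with b in H0 by field.
  replace (a + 2*((c-a)/2)) with c in H0 by field.
  rewrite H0. replace ((c - a) / 2 - (b - a) / 2) with ((c-b)/2) by field. ring.
Qed.

Definition phi (p q : nat) (th : nat -> R) (m : nat) : R :=
  2 * PI * INR (m / p) / INR q + psum th (m mod p).

Lemma phi_rep p q th d r : (r < p)%nat -> phi p q th (p*d + r) = 2*PI*INR d/INR q + psum th r.
Proof.
  intro H. unfold phi.
  replace ((p*d + r)/p)%nat with d.
  2:{ rewrite Nat.mul_comm, Nat.div_add_l by lia. rewrite Nat.div_small by lia. lia. }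
  replace ((p*d + r) mod p)%nat with r. reflexivity.
  rewrite Nat.add_comm, Nat.mul_comm, Nat.Div0.mod_add. rewrite Nat.mod_small by lia. reflexivity.
Qed.

Lemma phi_succ p q th m : (0 < p)%nat -> (0 < q)%nat -> psum th p = 2*PI/INR q ->
  phi p q th (m+1) = phi p q th m + th (m mod p).
Proof.
  intros Hp Hq Hs.
  pose proof (Nat.div_mod_eq m p) as Hm. pose proof (Nat.mod_upper_bound m p ltac:(lia)) as Hr.
  remember (m / p)%nat as d. remember (m mod p)%nat as r. rewrite Hm.
  rewrite phi_rep by lia.
  destruct (Nat.eq_dec (r+1) p) as [E|E].
  - replace (p*d + r + 1)%nat with (p*(d+1) + 0)%nat by lia. rewrite phi_rep by lia.
    simpl. rewrite plus_INR. simpl.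
    replace (2 * PI * (INR d + 1) / INR q) with (2 * PI * INR d / INR q + 2*PI/INR q).
    2:{ field. apply not_0_INR; lia. }
    rewrite <- Hs. rewrite <- E. replace (r+1)%nat with (S r) by lia. simpl. ring.
  - replace (p*d + r + 1)%nat with (p*d + S r)%nat by lia. rewrite phi_rep by lia.
    simpl. ring.
Qed.

Lemma phi_p p q th m : (0 < p)%nat -> (0 < q)%nat ->
  phi p q th (m+p) = phi p q th m + 2*PI/INR q.
Proof.
  intros Hp Hq.
  pose proof (Nat.div_mod_eq m p) as Hm. pose proof (Nat.mod_upper_bound m p ltac:(lia)) as Hr.
  remember (m / p)%nat as d. remember (m mod p)%nat as r. rewrite Hm.
  replace (p*d + r + p)%nat with (p*(d+1) + r)%nat by lia.
  rewrite !phi_rep by lia. rewrite plus_INR. simpl. field. apply not_0_INR; lia.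
Qed.

Lemma phi_ps p q th m s : (0 < p)%nat -> (0 < q)%nat ->
  phi p q th (m+p*s) = phi p q th m + INR s * (2*PI/INR q).
Proof.
  intros Hp Hq. induction s.
  - rewrite Nat.mul_0_r, Nat.add_0_r. simpl. ring.
  - replace (m + p * S s)%nat with ((m + p*s) + p)%nat by lia.
    rewrite phi_p, IHs by lia. rewrite S_INR. ring.
Qed.

Lemma phi_n p q th m : (0 < p)%nat -> (0 < q)%nat ->
  phi p q th (m + p*q) = phi p q th m + 2*PI.
Proof.
  intros. rewrite phi_ps by lia. field. apply not_0_INR; lia.
Qed.

Lemma phi_mono p q th : (0 < p)%nat -> (0 < q)%nat -> psum th p = 2*PI/INR q ->
  (forall j, (j < p)%nat -> 0 < th j) ->
  forall a b, (a < b)%nat -> phi p q th a < phi p q th b.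
Proof.
  intros Hp Hq Hs Ht a b Hab. induction Hab.
  - rewrite <- Nat.add_1_r, (phi_succ p q th a Hp Hq Hs). pose proof (Ht (a mod p)%nat (Nat.mod_upper_bound a p ltac:(lia))). lra.
  - rewrite <- Nat.add_1_r, (phi_succ p q th m Hp Hq Hs). pose proof (Ht (m mod p)%nat (Nat.mod_upper_bound m p ltac:(lia))). lra.
Qed.

Lemma vtx_phi p q th m : (0 < p)%nat -> (0 < q)%nat ->
  vtx (p*q) (division_point p q th) m = P (phi p q th m).
Proof.
  intros Hp Hq. unfold vtx.
  pose proof (Nat.div_mod_eq m (p*q)) as Hm.
  remember (m / (p*q))%nat as t. remember (m mod (p*q))%nat as r.
  rewrite Hm. replace (p*q*t)%nat with (p*(q*t))%nat by lia. rewrite (Nat.add_comm _ r), phi_ps by lia.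
  unfold division_point, P. fold (phi p q th r).
  replace (INR (q*t) * (2 * PI / INR q)) with (2 * INR t * PI).
  - rewrite cos_period, sin_period. reflexivity.
  - rewrite mult_INR. field. apply not_0_INR; lia.
Qed.

Lemma sin_half_pos d : 0 < d < 2*PI -> 0 < sin (d/2).
Proof. intros. apply sin_gt_0; lra. Qed.

Lemma sin_half_neg d : 0 < d < 2*PI -> sin ((-d)/2) < 0.
Proof. intros. replace (-d/2) with (-(d/2)) by field. rewrite sin_neg.
  pose proof (sin_half_pos d H). lra. Qed.

Lemma gen (p q t k : nat) th : (0 < p)%nat -> (0 < q)%nat -> (k - 1 = p*t)%nat ->
  (2 <= k)%nat -> (k < p*q)%nat -> (3 <= p*q)%nat ->
  (forall j, (j < p)%nat -> 0 < th j) -> psum th p = 2*PI/INR q ->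
  gutkin (p*q) k (division_point p q th).
Proof.
  intros Hp Hq Hk Hk2 Hkn H3 Ht Hs.
  set (ph := phi p q th).
  assert (Hd : forall a b, (a < b)%nat -> (b < a + p*q)%nat -> 0 < ph b - ph a < 2*PI).
  { intros a b H1 H2. pose proof (phi_mono p q th Hp Hq Hs Ht a b H1).
    pose proof (phi_mono p q th Hp Hq Hs Ht b (a + p*q) H2).
    pose proof (phi_n p q th a Hp Hq). unfold ph. lra. }
  split.
  - split; [exact H3|]. intros i j Hi Hj Hji Hj1.
    assert (Hc : (i + 1 < j)%nat \/ (j < i /\ i + 1 < j + p*q)%nat).
    { destruct (Nat.eq_dec (i+1) (p*q)) as [E|E].
      - rewrite E, Nat.Div0.mod_same in Hj1. lia.
      - rewrite Nat.mod_small in Hj1 by lia. lia. }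
    destruct Hc as [Hc|Hc].
    + rewrite !vtx_phi by lia. rewrite cross_gen.
      pose proof (sin_half_pos _ (Hd i (i+1)%nat ltac:(lia) ltac:(lia))).
      pose proof (sin_half_pos _ (Hd i j ltac:(lia) ltac:(lia))).
      pose proof (sin_half_pos _ (Hd (i+1)%nat j ltac:(lia) ltac:(lia))).
      fold ph. apply Rlt_gt. repeat apply Rmult_lt_0_compat; lra.
    + replace (vtx (p*q) (division_point p q th) j) with (vtx (p*q) (division_point p q th) (j + p*q)%nat)
        by (unfold vtx; rewrite <- (Nat.mul_1_l (p*q)) at 1; rewrite Nat.Div0.mod_add; reflexivity).
      rewrite !vtx_phi by lia. rewrite cross_gen.
      pose proof (sin_half_pos _ (Hd i (i+1)%nat ltac:(lia) ltac:(lia))).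
      pose proof (sin_half_pos _ (Hd i (j+p*q)%nat ltac:(lia) ltac:(lia))).
      pose proof (sin_half_pos _ (Hd (i+1)%nat (j+p*q)%nat ltac:(lia) ltac:(lia))).
      fold ph. apply Rlt_gt. repeat apply Rmult_lt_0_compat; lra.
  - exists (acos (cos (INR t * (2*PI/INR q) / 2))). intro i.
    rewrite !vtx_phi by lia. split.
    + rewrite angle_gen.
      * f_equal. f_equal. replace (i + k)%nat with ((i+1) + p*t)%nat by lia.
        rewrite phi_ps by lia. fold ph. field. apply not_0_INR; lia.
      * pose proof (sin_half_pos _ (Hd i (i+1)%nat ltac:(lia) ltac:(lia))).
        pose proof (sin_half_pos _ (Hd i (i+k)%nat ltac:(lia) ltac:(lia))).
        fold ph. apply Rmult_lt_0_compat; lra.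
    + rewrite angle_gen.
      * replace (i + k - 1)%nat with (i + p*t)%nat by lia.
        rewrite phi_ps by lia. f_equal.
        replace ((phi p q th i - (phi p q th i + INR t * (2 * PI / INR q))) / 2)
          with (- (INR t * (2 * PI / INR q) / 2)) by (field; apply not_0_INR; lia).
        rewrite cos_neg. reflexivity.
      * pose proof (sin_half_neg _ (Hd (i+k-1)%nat (i+k)%nat ltac:(lia) ltac:(lia))).
        pose proof (sin_half_neg _ (Hd i (i+k)%nat ltac:(lia) ltac:(lia))).
        fold ph. 
        replace ((ph (i + k - 1)%nat - ph (i + k)%nat)/2) with (- (ph (i + k)%nat - ph (i + k - 1)%nat) / 2) by field.
        replace ((ph i - ph (i + k)%nat)/2) with (- (ph (i + k)%nat - ph i) / 2) by field.
        nra.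
Qed.

Theorem mainTheorem13 (n k : nat) (th : nat -> R) :
  (2 <= k)%nat -> (2 * k <= n)%nat ->
  (1 < Nat.gcd n (k - 1))%nat ->
  (forall j : nat, (j < Nat.gcd n (k - 1))%nat -> 0 < th j) ->
  psum th (Nat.gcd n (k - 1)) = 2 * PI / INR (n / Nat.gcd n (k - 1)) ->
  gutkin n k (division_point (Nat.gcd n (k - 1)) (n / Nat.gcd n (k - 1)) th).
Proof.
  intros Hk Hn Hg Ht Hs.
  destruct (Nat.gcd_divide_l n (k-1)) as [z Hz].
  destruct (Nat.gcd_divide_r n (k-1)) as [t Ht2].
  set (p := Nat.gcd n (k-1)) in *.
  assert (Hq : (n / p = z)%nat) by (rewrite Hz; apply Nat.div_mul; lia).
  rewrite Hq in *.
  assert (Hnz : n = (p*z)%nat) by lia.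
  rewrite Hnz.
  assert (0 < z)%nat by (destruct z; lia).
  apply (gen p z t k th); try assumption; lia.
Qed.
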